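(* Let $L\subset\mathbb R^3$ be a nonclosed $b$-chord-arc curve, let $0<\alpha<1$, $p>1/\alpha$, and let $f\in C(L)$. Suppose there is a constant $c>0$ such that for every $0<\delta\le 2|L|$ there exists a function $v_\delta$ harmonic in $\Omega_\delta$ satisfying $$\left(\int_L\left(\frac{\max\nolimits_{\delta}(f-v_{\delta})(M)}{\delta^{\alpha}}\right)^p\,dm_1(M)\right)^{1/p}\le c \quad\text{and}\quad \left(\int_L\left(\delta^{1-\alpha}\,\operatorname{grad}^{\ast}_{\delta} v_{\delta}(M)\right)^p\,dm_1(M)\right)^{1/p}\le c.$$ Then $f\in\Lambda^\alpha_p(L)$.
   Context: $L$ is a nonclosed curve in $\mathbb R^3$ with endpoints $A,B$; it is $b$-chord-arc ($b\ge1$) if for all distinct $M_1,M_2\in L$ the subarc $\gamma(M_1,M_2)\subset L$ with endpoints $M_1,M_2$ satisfies $|\gamma(M_1,M_2)|\le b\|M_1M_2\|$, where $|\cdot|$ denotes length. $|L|$ is the length of $L$ and $m_1$ is arc-length measure on $L$. $B_r(M)$, $\bar B_r(M)$ denote the open and closed balls of radius $r$ centered at $M$. For $f$ on $L$, $M\in L$, $r>0$: $\Delta^{\ast}f(M,r)=\sup_{N\in\bar B_r(M)\cap L}|f(N)-f(M)|$. $\Lambda^\alpha_p(L)$ is the set of functions $f$ on $L$ with $\sup_{0<r<|L|}\left(\int_L\left(\Delta^*f(M,r)/r^\alpha\right)^p dm_1(M)\right)^{1/p}<\infty$. $\Omega_\delta=\bigcup_{M\in L}B_\delta(M)$. For $v$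 harmonic in $\Omega_\delta$ and $M\in L$, $\operatorname{grad}^*_\delta v(M)=\max_{N\in\bar B_{\delta/2}(M)}|\operatorname{grad}v(N)|$. For a function $F$ on $L$, $\max_\delta F(M)=\sup_{N\in\bar B_\delta(M)\cap L}|F(N)|$; here applied to $F=f-v_\delta$ restricted to $L$. *)

(* Defs.v *)
From HB Require Import structures.
From mathcomp Require Import all_boot all_order all_algebra.
From mathcomp Require Import all_classical all_reals all_analysis.
Set Implicit Arguments. Unset Strict Implicit. Unset Printing Implicit Defensive.
Import Order.TTheory GRing.Theory Num.Theory.
Import numFieldNormedType.Exports.
Local Open Scope classical_set_scope.
Local Open Scope ring_scope.

Section Defs.
Variable R : realType.
Notation P3 := 'rV[R]_3.

(* Euclidean norm on R^3 (the library norm on 'rV is the max norm). *)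
Definition enorm (x : P3) : R := Num.sqrt (\sum_(i < 3) x ord0 i ^+ 2).

Definition oball (M : P3) (r : R) : set P3 := [set N | enorm (N - M) < r].
Definition cball (M : P3) (r : R) : set P3 := [set N | enorm (N - M) <= r].

Definition curve_length (g : R -> P3) (s t : R) : \bar R :=
  ereal_sup [set x | exists (n : nat) (u : nat -> R),
     [/\ u 0%N = s, u n = t, (forall k, (k < n)%N -> u k <= u k.+1) &
         x = (\sum_(k < n) enorm (g (u k.+1) - g (u k)))%:E]].

(* g : [0, l] -> R^3 is an arc-length parametrization of a nonclosed (Jordan)
   curve of length l > 0 *)
Definition arclength_arc (g : R -> P3) (l : R) : Prop :=
  [/\ 0 < l,
      {in `[0, l]%classic &, injective g} &
      forall s t, 0 <= s -> s <= t -> t <= l -> curve_length g s t = (t - s)%:E].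

Definition curve (g : R -> P3) (l : R) : set P3 := g @` `[0, l]%classic.

Definition chord_arc (g : R -> P3) (l b : R) : Prop :=
  forall s t, 0 <= s -> s <= t -> t <= l ->
    (curve_length g s t <= (b * enorm (g s - g t))%:E)%E.

(* integral over L with respect to arc-length measure m_1 *)
Definition int_L (g : R -> P3) (l : R) (F : P3 -> \bar R) : \bar R :=
  (\int[@lebesgue_measure R]_(s in `[0%R, l]%classic) F (g s))%E.

Definition Delta_star (g : R -> P3) (l : R) (f : P3 -> R) (M : P3) (r : R) : \bar R :=
  ereal_sup [set (`|f N - f M|)%:E | N in cball M r `&` curve g l].

Definition Lambda (g : R -> P3) (l alpha p : R) (f : P3 -> R) : Prop :=
  (ereal_sup [set poweR (int_L g l (fun M =>
       poweR (Delta_star g l f M r * ((r `^ alpha)^-1)%:E) p)) p^-1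
     | r in `]0%R, l[%classic] < +oo)%E.

Definition Omega (g : R -> P3) (l d : R) : set P3 :=
  \bigcup_(M in curve g l) oball M d.

Definition evec (i : 'I_3) : P3 := \row_j (i == j)%:R.
Definition partial (i : 'I_3) (v : P3 -> R) : P3 -> R := fun x => derive v x (evec i).
Definition grad (v : P3 -> R) (x : P3) : P3 := \row_i partial i v x.

Definition harmonic_on (U : set P3) (v : P3 -> R) : Prop :=
  [/\ forall x, U x -> differentiable v x,
      forall i x, U x -> differentiable (partial i v) x,
      forall i j, {within U, continuous (partial j (partial i v))} &
      forall x, U x -> \sum_(i < 3) partial i (partial i v) x = 0].

Definition grad_star (d : R) (v : P3 -> R) (M : P3) : \bar R :=
  ereal_sup [set (enorm (grad v N))%:E | N in cball M (d / 2)].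

Definition max_delta (g : R -> P3) (l d : R) (F : P3 -> R) (M : P3) : \bar R :=
  ereal_sup [set (`|F N|)%:E | N in cball M d `&` curve g l].

End Defs.

(* Main.v *)
Require Import Defs.
From HB Require Import structures.
From mathcomp Require Import all_boot all_order all_algebra.
From mathcomp Require Import all_classical all_reals all_analysis.
From mathcomp Require Import ring lra.
From mathcomp Require Import measurable_realfun.
Import Order.TTheory GRing.Theory Num.Theory.
Import numFieldNormedType.Exports.
Local Open Scope classical_set_scope.
Local Open Scope ring_scope.

Section Enorm.
Variable R : realType.
Notation P3 := 'rV[R]_3.
Notation c0 := (0 : 'I_3).
Notation c1 := (1 : 'I_3).
Notation c2 := (2 : 'I_3).
Implicit Types x y : P3.

Definition dot (x y : P3) : R := x ord0 c0 * y ord0 c0 + x ord0 c1 * y ord0 c1 + x ord0 c2 * y ord0 c2.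

Lemma enormE (x : P3) : enorm x = Num.sqrt (x ord0 c0 ^+ 2 + x ord0 c1 ^+ 2 + x ord0 c2 ^+ 2).
Proof.
rewrite /enorm !big_ord_recr big_ord0 /= add0r.
by congr (Num.sqrt (x ord0 _ ^+ 2 + x ord0 _ ^+ 2 + x ord0 _ ^+ 2)); apply/val_inj.
Qed.

Lemma enorm_ge0 x : 0 <= enorm x.
Proof. exact: sqrtr_ge0. Qed.

Lemma enorm_sq x : enorm x ^+ 2 = x ord0 c0 ^+ 2 + x ord0 c1 ^+ 2 + x ord0 c2 ^+ 2.
Proof. by rewrite enormE sqr_sqrtr //; nra. Qed.

Lemma cauchy_schwarz x y : `|dot x y| <= enorm x * enorm y.
Proof.
rewrite /dot -sqrtr_sqr !enormE -sqrtrM; last nra.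
rewrite ler_sqrt; last nra.
set a0 := x ord0 c0; set a1 := x ord0 c1; set a2 := x ord0 c2.
set b0 := y ord0 c0; set b1 := y ord0 c1; set b2 := y ord0 c2.
have h : 0 <= (a0*b1 - a1*b0)^+2 + (a0*b2 - a2*b0)^+2 + (a1*b2-a2*b1)^+2 by rewrite !addr_ge0 ?sqr_ge0.
nra.
Qed.

Lemma dot_self x : dot x x = enorm x ^+ 2.
Proof. by rewrite enorm_sq /dot !expr2. Qed.

Lemma enormD x y : enorm (x + y) <= enorm x + enorm y.
Proof.
have hx := enorm_ge0 x; have hy := enorm_ge0 y; have hxy := enorm_ge0 (x + y).
have cs := cauchy_schwarz x y.
have e : enorm (x + y) ^+ 2 = enorm x ^+ 2 + enorm y ^+ 2 + 2 * dot x y.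
  by rewrite !enorm_sq /dot !mxE; ring.
have : enorm (x + y) ^+ 2 <= (enorm x + enorm y) ^+ 2.
  rewrite e; have := ler_norm (dot x y); nra.
rewrite -ler_sqrt ?sqrtr_sqr ?ger0_norm //; [nra| nra].
Qed.

Lemma enormZ (k : R) x : enorm (k *: x) = `|k| * enorm x.
Proof.
rewrite !enormE !mxE -sqrtr_sqr -sqrtrM ?sqr_ge0 //; congr Num.sqrt; ring.
Qed.

Lemma enormN x : enorm (- x) = enorm x.
Proof. by rewrite -scaleN1r enormZ normrN normr1 mul1r. Qed.

Lemma enormB x y : enorm (x - y) = enorm (y - x).
Proof. by rewrite -enormN opprB. Qed.

Lemma enorm0 : enorm (0 : P3) = 0.
Proof. by rewrite enormE !mxE expr0n /= !addr0 sqrtr0. Qed.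

End Enorm.
Arguments dot {R}.
Arguments enormE {R}.
Arguments enorm_ge0 {R}.
Arguments enorm_sq {R}.
Arguments cauchy_schwarz {R}.
Arguments dot_self {R}.
Arguments enormD {R}.
Arguments enormZ {R}.
Arguments enormN {R}.
Arguments enormB {R}.
Arguments enorm0 {R}.

Section Aux.
Variable R : realType.
Local Open Scope ereal_scope.

Lemma powR_key (x y z p : R) : (0 <= x)%R -> (0 <= y)%R -> (0 <= z)%R -> (0 < p)%R ->
  (z <= 4 * x + y)%R -> (z `^ p <= 8 `^ p * (x `^ p + y `^ p))%R.
Proof.
move=> x0 y0 z0 p0 hz.
have hp : (0 <= p)%R by apply: ltW.
have mono u w : (0 <= u)%R -> (0 <= w)%R -> (u <= w)%R -> (u `^ p <= w `^ p)%R.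
  by move=> u0 w0 uw; apply: ge0_ler_powR => //; rewrite nnegrE.
have px := powR_ge0 x p; have py := powR_ge0 y p; have p8 := powR_gt0 p (ltr0n R 8).
case: (lerP x y) => xy.
- apply: (le_trans (mono z (8 * y)%R z0 _ _)); [nra|nra|].
  rewrite powRM //; nra.
- apply: (le_trans (mono z (8 * x)%R z0 _ _)); [nra|nra|].
  rewrite powRM //; nra.
Qed.

Lemma key_pt (Dl A B : \bar R) (r ka kb kr p : R) :
  0 <= Dl -> 0 <= A -> 0 <= B -> (0 < r)%R -> (0 <= kr)%R -> (0 < ka)%R ->
  (0 < kb)%R -> (0 < p)%R -> (2 * kr <= 4 * ka)%R -> (r * kr <= kb)%R ->
  Dl <= A + A + r%:E * B ->
  poweR (Dl * kr%:E) p <= (8 `^ p)%:E * (poweR (A * ka%:E) p + poweR (kb%:E * B) p).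
Proof.
move=> D0 A0 B0 r0 kr0 ka0 kb0 p0 k1 k2 hD.
have p8 := powR_gt0 p (ltr0n R 8).
have pn0 : p != 0%R by rewrite gt_eqF.
case: A A0 hD => [a| |] //= A0 hD; last first.
  rewrite gt0_mulye ?lte_fin // poweRyr // addye; last first.
    by rewrite -ltNye; apply: (lt_le_trans _ (poweR_ge0 _ _)).
  by rewrite gt0_muley ?lte_fin // leey.
case: B B0 hD => [b| |] //= B0 hD; last first.
  rewrite gt0_muley ?lte_fin // poweRyr // addey; last first.
    by [].
  by rewrite gt0_muley ?lte_fin // leey.
case: Dl D0 hD => [dl| |] //= D0 hD.
apply: (@le_trans _ _ ((8 `^ p * ((a * ka) `^ p + (kb * b) `^ p))%:E)); last by rewrite EFinM EFinD.
rewrite lee_fin.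
rewrite lee_fin in A0; rewrite lee_fin in B0; rewrite lee_fin in D0.
rewrite -?EFinM -?EFinD lee_fin in hD.
apply: powR_key => //; [nra|nra|nra|nra].
Qed.

Lemma le_int_nomeas (D : set R) (f1 f2 : R -> \bar R) :
  (forall x, D x -> 0 <= f1 x) -> (forall x, D x -> f1 x <= f2 x) ->
  \int[lebesgue_measure]_(x in D) f1 x <= \int[lebesgue_measure]_(x in D) f2 x.
Proof.
move=> f10 f12.
have f20 x : D x -> 0 <= f2 x by move=> Dx; apply: le_trans (f10 _ Dx) (f12 _ Dx).
rewrite !ge0_integralE //.
apply: ge_ereal_sup => _ [h hf <-]; apply: ereal_sup_ubound; exists h => //= x.
apply: le_trans (hf x) _; exact: lee_restrict.
Qed.

Lemma poweR_inv_le (I : \bar R) (c p : R) : 0 <= I -> (0 < p)%R ->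
  poweR I p^-1 <= c%:E -> I <= (c `^ p)%:E.
Proof.
move=> I0 p0 h.
have -> : I = poweR (poweR I p^-1) p.
  by rewrite -poweRrM mulVf ?gt_eqF // poweRe1.
rewrite -poweR_EFin; apply: gt0_ler_poweR => //; first exact: ltW.
- by rewrite in_itv /= poweR_ge0 leey.
- rewrite in_itv /= leey andbT; apply: le_trans h; exact: poweR_ge0.
Qed.

End Aux.
Arguments powR_key {R}.
Arguments key_pt {R}.
Arguments le_int_nomeas {R}.
Arguments poweR_inv_le {R}.

Section Geo.
Variable R : realType.
Notation P3 := 'rV[R]_3.

Definition clamp (l s : R) : R := if s < 0 then 0 else if l < s then l else s.

Lemma clamp_in l s : 0 <= l -> 0 <= clamp l s <= l.
Proof. move=> l0; rewrite /clamp; case: ifP => h1; [lra|case: ifP => h2; lra]. Qed.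

Lemma clamp_id l s : 0 <= s -> s <= l -> clamp l s = s.
Proof. move=> s0 sl; rewrite /clamp; case: ifP => h1; [lra|case: ifP => h2; lra]. Qed.

Lemma clamp_mono l s t : 0 <= l -> s <= t -> 0 <= clamp l t - clamp l s <= t - s.
Proof.
move=> l0 st; rewrite /clamp.
case: ifP => h1; case: ifP => h2; try case: ifP => h3; try case: ifP => h4; lra.
Qed.

Lemma g_lip (g : R -> P3) l s t : arclength_arc g l -> 0 <= s -> s <= t -> t <= l ->
  enorm (g t - g s) <= t - s.
Proof.
case=> _ _ hl s0 st tl.
have := hl s t s0 st tl; rewrite /curve_length => e.
rewrite -lee_fin -e; apply: ereal_sup_ubound => /=.
exists 1%N, (fun k => if k is 0%N then s else t); split => //.
  by move=> [|k] //= _; rewrite lexx.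
by rewrite big_ord1.
Qed.

Definition gc (g : R -> P3) l s := g (clamp l s).

Lemma gc_lip (g : R -> P3) l s t : arclength_arc g l ->
  enorm (gc g l t - gc g l s) <= `|t - s|.
Proof.
move=> hg; have l0 : 0 <= l by case: hg => /ltW.
wlog st : s t / s <= t.
  move=> H; case/orP: (le_total s t) => st; first exact: (H s t st).
  by rewrite enormB distrC; apply: (H t s).
have h3 := @clamp_mono l s t l0 st; have h2 := @clamp_in l s l0; have h1 := @clamp_in l t l0.
rewrite /gc; have := @g_lip g l (clamp l s) (clamp l t) hg; move=> /(_ ltac:(lra) ltac:(lra) ltac:(lra)) h4.
rewrite ger0_norm; lra.
Qed.

Definition Sop (g : R -> P3) l (C : set P3) (h : P3 -> R) (d : R) (s : R) : \bar R :=
  ereal_sup [set (h N)%:E | N in oball (gc g l s) d `&` C].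

Lemma Sop_lsc g l C h d : arclength_arc g l -> lower_semicontinuous (Sop g l C h d).
Proof.
move=> hg s0 a /ereal_sup_gt [_ [N [HN HC] <-] ha].
rewrite /oball /= in HN.
exists (ball s0 (d - enorm (N - gc g l s0))); first by apply: nbhsx_ballx; lra.
move=> y; rewrite /ball /= => hy.
apply: lt_le_trans ha _; apply: ereal_sup_ubound; exists N => //; split => //.
rewrite /oball /=.
have -> : N - gc g l y = (N - gc g l s0) + (gc g l s0 - gc g l y) by rewrite addrA subrK.
apply: le_lt_trans (@enormD _ _ _) _.
have := @gc_lip g l y s0 hg; lra.
Qed.

Lemma Sop_meas g l C h rad (D : set R) : arclength_arc g l -> measurable D ->
  measurable_fun D (Sop g l C h rad).
Proof.
move=> hg mD; apply: (measurable_funS measurableT) => //; last first.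
exact: lower_semicontinuous_measurable (@Sop_lsc g l C h rad hg).
Qed.

End Geo.
Arguments clamp {R}.
Arguments clamp_in {R}.
Arguments clamp_id {R}.
Arguments clamp_mono {R}.
Arguments g_lip {R}.
Arguments gc {R}.
Arguments gc_lip {R}.
Arguments Sop {R}.
Arguments Sop_lsc {R}.
Arguments Sop_meas {R}.

Section MV.
Variable R : realType.
Notation P3 := 'rV[R]_3.
Notation c0 := (0 : 'I_3).
Notation c1 := (1 : 'I_3).
Notation c2 := (2 : 'I_3).

Lemma d_dot (v : P3 -> R) x w : differentiable v x -> 'd v x w = dot w (grad v x).
Proof.
move=> dv.
have ew : w = w ord0 c0 *: evec R c0 + w ord0 c1 *: evec R c1 + w ord0 c2 *: evec R c2.
  apply/rowP => j; rewrite !mxE.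
  case: j => [[|[|[|j]]] hj] //=; rewrite ?mulr1 ?mulr0 ?addr0 ?add0r;
  by congr (w _ _); apply: val_inj.
rewrite {1}ew.
rewrite !(linearD ('d v x)) !(linearZ_LR ('d v x)) /= /dot /grad !mxE /partial -!deriveE //.
Qed.

Lemma line_derive (v : P3 -> R) (M w : P3) (t : R) :
  differentiable v (t *: w + M) ->
  is_derive t 1 (fun s => v (s *: w + M)) ('d v (t *: w + M) w).
Proof.
move=> dv.
have pt (e : R) : (e%:A + t) *: w + M = e *: w + (t *: w + M).
  by rewrite [_%:A]mulr1 scalerDl addrA.
apply: DeriveDef.
  apply/derivable1P => /=.
  under eq_fun do rewrite pt.
  by apply: (proj1 (derivable1P v _ _)); exact: diff_derivable.
rewrite -deriveE // /derive; f_equal; f_equal; apply/funext => e /=.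
by rewrite /shift /= pt.
Qed.


Lemma mvt_bound (v : P3 -> R) (M N : P3) (r : R) (B : \bar R) :
  0 < r -> enorm (N - M) <= r ->
  (forall t, 0 <= t <= 1 -> differentiable v (t *: (N - M) + M)) ->
  (forall P, enorm (P - M) < r -> ((enorm (grad v P))%:E <= B)%E) ->
  ((`|v N - v M|)%:E <= r%:E * B)%E.
Proof.
move=> r0 hN dv hB.
have ho (x : R) : x \in `]0, 1[ -> 0 <= x <= 1.
  by rewrite in_itv /= => /andP[h1 h2]; rewrite !ltW.
have hc (x : R) : x \in `[0, 1] -> 0 <= x <= 1 by rewrite in_itv /=.
have cont : {within `[0, 1], continuous (fun s => v (s *: (N - M) + M))}.
  apply: derivable_within_continuous => x x01.
  have := line_derive _ _ _ _ (dv x (hc x x01)).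
  by case.
have [c c01 he] := @MVT R (fun s => v (s *: (N - M) + M))
   (fun t => 'd v (t *: (N - M) + M) (N - M)) 0 1 ltr01
   (fun x x01 => line_derive _ _ _ _ (dv x (ho x x01))) cont.
move: he; rewrite scale1r scale0r add0r subrK subr0 mulr1 => he.
have /andP[cz co] := ho c c01.
rewrite he d_dot; last exact: (dv c (ho c c01)).
set P := c *: (N - M) + M.
have hP : enorm (P - M) < r.
  rewrite /P addrK enormZ ger0_norm //.
  have := enorm_ge0 (N - M); move: c01; rewrite in_itv /= => /andP[h1 h2]; nra.
have := hB P hP; have cs := cauchy_schwarz (N - M) (grad v P).
have eg := enorm_ge0 (grad v P); have en := enorm_ge0 (N - M).
move=> hb; apply: (@le_trans _ _ (r%:E * (enorm (grad v P))%:E)%E); last by apply: lee_wpmul2l => //; rewrite lee_fin ltW.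
rewrite -EFinM lee_fin.
apply: le_trans cs _; nra.
Qed.

End MV.
Arguments d_dot {R}.
Arguments line_derive {R}.
Arguments mvt_bound {R}.


Lemma pow_facts {R : realType} (r alpha : R) : 0 < r -> 0 < alpha -> alpha < 1 ->
  2 * (r `^ alpha)^-1 <= 4 * ((2 * r) `^ alpha)^-1 /\
  r * (r `^ alpha)^-1 <= (2 * r) `^ (1 - alpha).
Proof.
move=> r0 a0 a1.
have ra := powR_gt0 alpha r0.
have h2 : 2 `^ alpha <= 2 :> R by apply: ler1_powR; [lra|lra].
have h2' : 0 < 2 `^ alpha :> R by apply: powR_gt0; lra.
have h3 : 1 <= 2 `^ (1 - alpha) :> R.
  by rewrite -[X in X <= _](powRr0 2); apply: ler_powR; lra.
split.
  rewrite powRM; [|lra|lra].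
  rewrite invfM.
  have : (2 `^ alpha)^-1 >= 2^-1 :> R by rewrite lef_pV2 ?posrE //; lra.
  have := invr_gt0 (r `^ alpha); rewrite ra => hi.
  nra.
rewrite powRM; [|lra|lra].
have -> : r * (r `^ alpha)^-1 = r `^ (1 - alpha).
  rewrite powRB; last by rewrite gt_eqF ?orbT ?implybT.
  by rewrite powRr1 // ltW.
have := powR_gt0 (1 - alpha) r0; nra.
Qed.

Theorem theorem2 (R : realType) (g : R -> 'rV[R]_3) (l b alpha p : R)
    (f : 'rV[R]_3 -> R) :
  arclength_arc g l -> 1 <= b -> chord_arc g l b ->
  0 < alpha -> alpha < 1 -> alpha^-1 < p ->
  {within curve g l, continuous f} ->
  (exists c : R, 0 < c /\
     forall d : R, 0 < d -> d <= 2 * l ->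
       exists v : 'rV[R]_3 -> R,
         [/\ harmonic_on (Omega g l d) v,
             (poweR (int_L g l (fun M =>
                 poweR (max_delta g l d (fun N => (f N - v N)%R) M
                        * ((d `^ alpha)^-1)%R%:E) p)) p^-1%R <= c%:E)%E &
             (poweR (int_L g l (fun M =>
                 poweR ((d `^ (1 - alpha))%R%:E * grad_star d v M) p)) p^-1%R
               <= c%:E)%E]) ->
  Lambda g l alpha p f.
Proof.
move=> hg _ _ a0 a1 ap _ [c [c0 hyp]].
have l0 : 0 < l by case: hg.
have p0 : 0 < p by apply: lt_trans ap; rewrite invr_gt0.
set K := 8 `^ p * (c `^ p + c `^ p).
have K0 : 0 <= K.
  by rewrite /K mulr_ge0 ?addr_ge0 ?powR_ge0.
rewrite /Lambda; apply: (@le_lt_trans _ _ (K `^ p^-1)%:E); last exact: ltry.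
apply: ge_ereal_sup => _ [r r0l <-].
move: r0l; rewrite /= in_itv /= => /andP[r0 rl].
set d := 2 * r.
have d0 : 0 < d by rewrite /d; lra.
have [v [hv H1 H2]] := hyp d d0 ltac:(rewrite /d; lra).
suff hI : (int_L g l (fun M => poweR (Delta_star g l f M r * ((r `^ alpha)^-1)%:E) p)
   <= K%:E)%E.
  rewrite -poweR_EFin; apply: gt0_ler_poweR => //.
  - by rewrite invr_ge0 ltW.
  - rewrite in_itv /= leey andbT; apply: integral_ge0 => s _; exact: poweR_ge0.
  - by rewrite in_itv /= leey andbT lee_fin.
set D := `[0%R, l]%classic.
have mD : measurable D by exact: measurable_itv.
set F := fun N => f N - v N.
set ka := (d `^ alpha)^-1.
set kb := d `^ (1 - alpha).
set kr := (r `^ alpha)^-1.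
have ka0 : 0 < ka by rewrite /ka invr_gt0 powR_gt0.
have kb0 : 0 < kb by rewrite /kb powR_gt0.
have kr0 : 0 < kr by rewrite /kr invr_gt0 powR_gt0.
have [k1 k2] := @pow_facts R r alpha r0 a0 a1.
set A := Sop g l (curve g l) (fun N => `|F N|) d.
set B := Sop g l setT (fun N => enorm (grad v N)) r.
have gcE s : D s -> gc g l s = g s.
  by rewrite /D /= in_itv /= => /andP[s0 sl]; rewrite /gc clamp_id.
have hc s : D s -> curve g l (g s) by move=> Ds; exists s.
have A0 s : D s -> (0 <= A s)%E.
  move=> Ds; apply: le_trans (ereal_sup_ubound _); last first.
    exists (g s) => //; split; last exact: hc.
    by rewrite /oball /= gcE // subrr enorm0.
  by rewrite lee_fin.
have B0 s : D s -> (0 <= B s)%E.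
  move=> Ds; apply: le_trans (ereal_sup_ubound _); last first.
    exists (g s) => //; split => //.
    by rewrite /oball /= gcE // subrr enorm0.
  by rewrite lee_fin enorm_ge0.
have hAM s : D s -> (A s <= max_delta g l d F (g s))%E.
  move=> Ds; rewrite /A /Sop gcE //; apply: ereal_sup_le => _ [N [HN HC] <-].
  by exists N => //; split => //; rewrite /cball /=; apply: ltW.
have hBG s : D s -> (B s <= grad_star d v (g s))%E.
  move=> Ds; rewrite /B /Sop gcE //; apply: ereal_sup_le => _ [N [HN HC] <-].
  exists N => //; rewrite /cball /=; rewrite /oball /= in HN; rewrite /d; lra.
have mX : measurable_fun D (fun s => poweR (A s * ka%:E)%E p).
  have -> : (fun s => poweR (A s * ka%:E)%E p) = (poweR^~ p) \o (fun s => (ka%:E * A s)%E).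
    by apply/funext => s /=; rewrite muleC.
  apply: measurableT_comp; first exact: measurable_poweR.
  by apply: measurable_funeM; apply: Sop_meas.
have mY : measurable_fun D (fun s => poweR (kb%:E * B s)%E p).
  have -> : (fun s => poweR (kb%:E * B s)%E p) = (poweR^~ p) \o (fun s => (kb%:E * B s)%E).
    by [].
  apply: measurableT_comp; first exact: measurable_poweR.
  by apply: measurable_funeM; apply: Sop_meas.
have step1 : (int_L g l (fun M => poweR (Delta_star g l f M r * kr%:E) p) <=
  \int[lebesgue_measure]_(s in D) ((8 `^ p)%:E * (poweR (A s * ka%:E) p + poweR (kb%:E * B s) p)))%E.
  rewrite /int_L; apply: le_int_nomeas => s Ds; first exact: poweR_ge0.
  have hD0 : (0 <= Delta_star g l f (g s) r)%E.
    apply: (@le_trans _ _ (`|f (g s) - f (g s)|)%:E); first by rewrite subrr normr0.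
    apply: ereal_sup_ubound; exists (g s) => //; split; last exact: hc.
    by rewrite /cball /= subrr enorm0; exact: ltW.
  have hDl : (Delta_star g l f (g s) r <= A s + A s + r%:E * B s)%E.
    apply: ge_ereal_sup => _ [N [HN HC] <-].
    rewrite /cball /= in HN.
    have hFN : ((`|F N|)%:E <= A s)%E.
      apply: ereal_sup_ubound; exists N => //; split => //.
      by rewrite /oball /= gcE // /d; lra.
    have hFM : ((`|F (g s)|)%:E <= A s)%E.
      apply: ereal_sup_ubound; exists (g s) => //; split; last exact: hc.
      by rewrite /oball /= gcE // subrr enorm0.
    have hV : ((`|v N - v (g s)|)%:E <= r%:E * B s)%E.
      apply: mvt_bound => //.
        move=> t /andP[t0 t1]; case: hv => hd _ _ _; apply: hd.
        exists (g s); first exact: hc.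
        rewrite /oball /= addrK enormZ ger0_norm //.
        have := enorm_ge0 (N - g s); rewrite /d; nra.
      move=> P hP; apply: ereal_sup_ubound; exists P => //; split => //.
      by rewrite /oball /= gcE.
    apply: le_trans (leeD (leeD hFN hFM) hV).
    rewrite -!EFinD lee_fin.
    have -> : f N - f (g s) = (F N - F (g s)) + (v N - v (g s)) by rewrite /F; ring.
    have t1 := ler_normD (F N - F (g s)) (v N - v (g s)).
    have t2 := ler_normB (F N) (F (g s)); lra.
  exact: (key_pt _ _ _ _ _ _ _ _ hD0 (A0 s Ds) (B0 s Ds) r0 (ltW kr0) ka0 kb0 p0 k1 k2 hDl).
apply: le_trans step1 _.
have X0 : forall s, D s -> (0 <= poweR (A s * ka%:E) p)%E by move=> s _; exact: poweR_ge0.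
have Y0 : forall s, D s -> (0 <= poweR (kb%:E * B s) p)%E by move=> s _; exact: poweR_ge0.
have mXY : measurable_fun D (fun s => (poweR (A s * ka%:E) p + poweR (kb%:E * B s) p)%E).
  exact: emeasurable_funD.
have XY0 : forall s, D s -> (0 <= poweR (A s * ka%:E) p + poweR (kb%:E * B s) p)%E.
  by move=> s Ds; apply: adde_ge0; [exact: X0|exact: Y0].
have k80 : (0 <= (8 `^ p)%:E)%E by rewrite lee_fin ltW ?powR_gt0.
have E1 := ge0_integralZl lebesgue_measure mD mXY XY0 k80.
have E2 := ge0_integralD lebesgue_measure mD X0 mX Y0 mY.
simpl in E1, E2; rewrite E1 E2.
rewrite /K EFinM; apply: lee_wpmul2l; first by rewrite lee_fin ltW ?powR_gt0.
rewrite EFinD; apply: leeD.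
- apply: le_trans (poweR_inv_le _ _ _ _ p0 H1); last by apply: integral_ge0 => s _; exact: poweR_ge0.
  apply: le_int_nomeas => s Ds; first exact: poweR_ge0.
  apply: gt0_ler_poweR; first exact: ltW.
  + by rewrite in_itv /= leey andbT mule_ge0 ?A0 // lee_fin ltW.
  + rewrite in_itv /= leey andbT mule_ge0 // ?lee_fin ?(ltW ka0) //.
    exact: le_trans (A0 s Ds) (hAM s Ds).
  + by apply: lee_wpmul2r; [rewrite lee_fin ltW | exact: hAM].
- apply: le_trans (poweR_inv_le _ _ _ _ p0 H2); last by apply: integral_ge0 => s _; exact: poweR_ge0.
  apply: le_int_nomeas => s Ds; first exact: poweR_ge0.
  apply: gt0_ler_poweR; first exact: ltW.
  + by rewrite in_itv /= leey andbT mule_ge0 ?B0 // lee_fin ltW.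
  + rewrite in_itv /= leey andbT mule_ge0 // ?lee_fin ?(ltW kb0) //.
    exact: le_trans (B0 s Ds) (hBG s Ds).
  + by apply: lee_wpmul2l; [rewrite lee_fin ltW | exact: hBG].
Qed.
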